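(* Let $\mathcal{I}\subseteq\mathcal{M}_m$ be decreasing, $r=\max_{u\in\mathcal{I}}\deg(u)$, and $f,g\in\mathcal{I}_r$. Suppose that either (1) the two largest indices in $\operatorname{ind}\bigl(fg/\gcd(f,g)\bigr)$ both belong to $\operatorname{ind}(f)$, or both belong to $\operatorname{ind}(g)$; or (2) $\deg(\gcd(f,g))<r-2$. Then $$\bigl|\mathrm{LTA}(m,2)\cdot f+\mathrm{LTA}(m,2)\cdot g\bigr|=\bigl|\mathrm{LTA}(m,2)\cdot f\bigr|\cdot\bigl|\mathrm{LTA}(m,2)\cdot g\bigr|.$$
   Context: $\mathcal{M}_m$ is the set of square-free monomials in $x_0,\dots,x_{m-1}$ (in $\mathbf{R}_m=\mathbb{F}_2[x_0,\dots,x_{m-1}]/(x_i^2-x_i)$). For a monomial $f$, $\operatorname{ind}(f)$ is its set of variable indices, $\deg f=|\operatorname{ind} f|$; $fg$ has index set $\operatorname{ind}(f)\cup\operatorname{ind}(g)$, $\gcd(f,g)$ has index set $\operatorname{ind}(f)\cap\operatorname{ind}(g)$. Decreasing sets: $f\preceq_w g$ iff $f\mid g$; for equal degree $f=x_{i_1}\cdots x_{i_s}$, $g=x_{j_1}\cdots x_{j_s}$ (increasing indices), $f\preceq_{sh} g$ iff $i_\ell\le j_\ell$ for all $\ell$; $f\preceq g$ iff $f\preceq_{sh}g^*\preceq_w g$ for some $g^*$; $\mathcal{I}$ is decreasing if $f\in\mathcal{I}$, $g\preceq f$ imply $g\in\mathcal{I}$; $\mathcal{I}_r$ is the set of degree-$r$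 elements of $\mathcal{I}$. $\mathrm{LTA}(m,2)$ is the group of pairs $(\mathbf{B},\varepsilon)$, $\mathbf{B}=(b_{i,j})$ binary lower triangular $m\times m$ with unit diagonal, $\varepsilon\in\mathbb{F}_2^m$, acting on a monomial $u$ by $x_i\mapsto x_i+\sum_{j<i}b_{i,j}x_j+\varepsilon_i$ for $i\in\operatorname{ind}(u)$; $\mathrm{LTA}(m,2)\cdot f$ is the orbit (a set of polynomials). $A+B=\{a+b: a\in A,b\in B\}$. *)

(* Defs.v *)
From mathcomp Require Import all_boot all_order all_algebra.
Set Implicit Arguments. Unset Strict Implicit. Unset Printing Implicit Defensive.

(* The ring R_m = F_2[x_0..x_{m-1}]/(x_i^2 - x_i), represented by its       *)
(* canonical normal form: an element is an F_2-linear combination of        *)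
(* square-free monomials, i.e. the set of square-free monomials occurring   *)
(* with coefficient 1.  A square-free monomial is given by its index set    *)
(* ind(u) : {set 'I_m}.                                                     *)

Notation monomial m := {set 'I_m}.
Notation Rpoly m := {set {set 'I_m}}.

Section Ring.
Variable m : nat.

(* addition in characteristic 2: symmetric difference of supports *)
Definition padd (p q : Rpoly m) : Rpoly m := (p :|: q) :\: (p :&: q).
Definition pzero : Rpoly m := set0.
Definition pone : Rpoly m := [set (set0 : monomial m)].
Definition pvar (i : 'I_m) : Rpoly m := [set [set i]].
Definition pconst (b : bool) : Rpoly m := if b then pone else pzero.
Definition pmono (u : monomial m) : Rpoly m := [set u].

(* multiplication: monomials multiply by union of index sets (x_i^2 = x_i) *)
Definition pmul (p q : Rpoly m) : Rpoly m :=
  \big[padd/pzero]_(a in p) \big[padd/pzero]_(b in q) pmono (a :|: b).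

Definition sorted_ind (u : monomial m) : seq nat :=
  sort leq [seq val i | i <- enum u].

(* f <=_w g iff f | g *)
Definition prec_w (f g : monomial m) : bool := f \subset g.

Definition prec_sh (f g : monomial m) : bool :=
  (#|f| == #|g|) && all2 leq (sorted_ind f) (sorted_ind g).

Definition prec (f g : monomial m) : bool :=
  [exists gs : monomial m, prec_sh f gs && prec_w gs g].

Definition decreasing (I : {set monomial m}) : Prop :=
  forall f g : monomial m, f \in I -> prec g f -> g \in I.

Definition maxdeg (I : {set monomial m}) : nat := \max_(u in I) #|u|.

Definition lower_unitriangular (B : 'M[bool]_m) : bool :=
  [forall i, [forall j, (B i j == (val i == val j)) || (val j < val i)]].

Definition LTA : {set 'M[bool]_m * {ffun 'I_m -> bool}} :=
  [set Be | lower_unitriangular Be.1].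

Definition lta_image (B : 'M[bool]_m) (eps : {ffun 'I_m -> bool}) (i : 'I_m)
  : Rpoly m :=
  padd (pvar i)
       (padd (\big[padd/pzero]_(j < m | (val j < val i) && B i j) pvar j)
             (pconst (eps i))).

Definition lta_act (Be : 'M[bool]_m * {ffun 'I_m -> bool}) (u : monomial m)
  : Rpoly m :=
  \big[pmul/pone]_(i in u) lta_image Be.1 Be.2 i.

Definition lta_orbit (f : monomial m) : {set Rpoly m} :=
  [set lta_act Be f | Be in LTA].

Definition sumset (A B : {set Rpoly m}) : {set Rpoly m} :=
  [set padd a b | a in A, b in B].

Definition two_largest_in (D S : {set 'I_m}) : Prop :=
  exists a b : 'I_m,
    [/\ a \in D, b \in D, val a < val b,
        (forall c, c \in D -> c != a -> c != b -> val c < val a)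
      & (a \in S) && (b \in S)].

End Ring.

(* Main.v *)
Require Import Defs.
From mathcomp Require Import all_boot all_order all_algebra zify.
Set Implicit Arguments. Unset Strict Implicit. Unset Printing Implicit Defensive.

Section Work.
Variable m : nat.
Local Notation poly := (Rpoly m).
Local Notation mon := (monomial m).
Local Notation pzero := (pzero m).
Local Notation padd := (@padd m).
Local Notation pmul := (@pmul m).
Local Notation pone := (pone m).
Local Notation pconst := (pconst m).

Lemma mem_padd (p q : poly) x : (x \in padd p q) = (x \in p) (+) (x \in q).
Proof. by rewrite /padd !inE; case: (x \in p); case: (x \in q). Qed.

Lemma mem_bigpadd (I : finType) (P : pred I) (F : I -> poly) x :
  (x \in \big[padd/pzero]_(i | P i) F i) = \big[addb/false]_(i | P i) (x \in F i).
Proof.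
apply: (big_morph (fun p : poly => x \in p)) => [p q|]; first exact: mem_padd.
by rewrite /pzero inE.
Qed.

Lemma mem_pmul (p q : poly) x :
  (x \in pmul p q) = \big[addb/false]_(a in p) \big[addb/false]_(b in q) (x == a :|: b).
Proof.
rewrite /pmul mem_bigpadd; apply: eq_bigr => a _.
by rewrite mem_bigpadd; apply: eq_bigr => b _; rewrite /pmono inE.
Qed.

Lemma xor_ex (I : finType) (P : pred I) (F : pred I) :
  \big[addb/false]_(i | P i) F i -> exists i, P i && F i.
Proof.
move=> H; apply/existsP; move: H; apply: contraLR; rewrite negb_exists => /forallP H.
rewrite big1 // => i Pi; have := H i; rewrite Pi /=; exact: negbTE.
Qed.

Lemma mem_pmul_ex (p q : poly) x : x \in pmul p q ->
  exists a b, [/\ a \in p, b \in q & x = a :|: b].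
Proof.
rewrite mem_pmul => /xor_ex [a /andP [Ha /xor_ex [b /andP [Hb /eqP ->]]]].
by exists a, b.
Qed.

Definition ev (p : poly) (S : mon) : bool := \big[addb/false]_(u in p) (u \subset S).

Lemma ev_padd p q S : ev (padd p q) S = ev p S (+) ev q S.
Proof.
rewrite /ev (big_mkcond (mem (padd p q))) (big_mkcond (mem p)) (big_mkcond (mem q)).
rewrite -big_split /=; apply: eq_bigr => u _; rewrite mem_padd.
by case: (u \in p); case: (u \in q); case: (u \subset S).
Qed.

Lemma ev_pzero S : ev pzero S = false.
Proof. by rewrite /ev /pzero big_set0. Qed.

Lemma ev_pone S : ev pone S = true.
Proof. by rewrite /ev /pone big_set1 sub0set. Qed.

Lemma ev_big (I : finType) (P : pred I) (F : I -> poly) S :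
  ev (\big[padd/pzero]_(i | P i) F i) S = \big[addb/false]_(i | P i) ev (F i) S.
Proof.
apply: (big_morph (fun p : poly => ev p S)) => [p q|]; first exact: ev_padd.
exact: ev_pzero.
Qed.

Lemma ev_pmul p q S : ev (pmul p q) S = ev p S && ev q S.
Proof.
rewrite /pmul ev_big; under eq_bigr do rewrite ev_big.
rewrite /ev big_distrl /=; apply: eq_bigr => a _.
rewrite big_distrr /=; apply: eq_bigr => b _.
by rewrite /pmono big_set1 subUset.
Qed.

Lemma ev_pvar i S : ev (pvar i) S = (i \in S).
Proof. by rewrite /ev /pvar big_set1 sub1set. Qed.

Lemma ev_pconst b S : ev (pconst b) S = b.
Proof. by case: b; rewrite /pconst ?ev_pone ?ev_pzero. Qed.

Lemma ev0 (r : poly) : (forall S, ev r S = false) -> r = pzero.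
Proof.
move=> H; case: (set_0Vmem r) => [//|[u0 Hu0]].
case: (arg_minnP (fun v : mon => #|v|) Hu0) => u Hu Hmin.
have := H u; rewrite /ev (bigD1 u) //= subxx big1 // => v /andP [Hv Hvu].
apply/negP => Hsub; have := Hmin v Hv.
have: v \proper u by rewrite properEneq Hvu Hsub.
move/proper_card; rewrite ltnNge => /negP; done.
Qed.

Lemma ev_inj (p q : poly) : (forall S, ev p S = ev q S) -> p = q.
Proof.
move=> H; have: padd p q = pzero by apply: ev0 => S; rewrite ev_padd H; case: (ev q S).
move=> E; apply/setP => x; have: x \in padd p q = false by rewrite E /pzero inE.
by rewrite mem_padd; case: (x \in p); case: (x \in q).
Qed.


Definition w (u : mon) : nat := \sum_(j in u) 2 ^ (nat_of_ord j).

Lemma sum_pow_lt (t : nat) : t <= m -> \sum_(j < m | j < t) 2 ^ j < 2 ^ t.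
Proof.
move=> Ht; rewrite -(big_ord_widen_cond _ (fun _ => true) (fun j => 2 ^ j) Ht) /=.
elim: t Ht => [|t IH] Ht; first by rewrite big_ord0.
rewrite big_ord_recr /= expnS; have := IH (ltnW Ht); lia.
Qed.

Lemma w_below (v : mon) (t : nat) : t <= m -> (forall j, j \in v -> nat_of_ord j < t) -> w v < 2 ^ t.
Proof.
move=> Ht H; apply: leq_ltn_trans (sum_pow_lt Ht).
rewrite /w big_mkcond [X in _ <= X]big_mkcond /=.
apply: leq_sum => j _; case E: (j \in v) => //; by rewrite (H _ E).
Qed.

Lemma w_split (u : mon) (i : 'I_m) :
  w u = \sum_(j in u | nat_of_ord i < nat_of_ord j) 2 ^ (nat_of_ord j) + \sum_(j in u | ~~ (nat_of_ord i < nat_of_ord j)) 2 ^ (nat_of_ord j).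
Proof. by rewrite /w (bigID (fun j : 'I_m => nat_of_ord i < nat_of_ord j)). Qed.

Lemma wlt (u v : mon) (i : 'I_m) : i \in u -> i \notin v ->
  (forall j : 'I_m, nat_of_ord i < nat_of_ord j -> (j \in u) = (j \in v)) -> w v < w u.
Proof.
move=> Hu Hv H; rewrite (w_split u i) (w_split v i).
have -> : \sum_(j in v | nat_of_ord i < nat_of_ord j) 2 ^ (nat_of_ord j) = \sum_(j in u | nat_of_ord i < nat_of_ord j) 2 ^ (nat_of_ord j).
  by apply: eq_bigl => j; case E: (nat_of_ord i < nat_of_ord j); rewrite ?andbT ?andbF // H.
rewrite ltn_add2l.
have H1 : \sum_(j in v | ~~ (nat_of_ord i < nat_of_ord j)) 2 ^ (nat_of_ord j) <= \sum_(j < m | j < i) 2 ^ j.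
  rewrite big_mkcond [X in _ <= X]big_mkcond /=.
  apply: leq_sum => j _; case E: (j \in v) => //=; case: ltngtP => //= Hij.
  have Eji : j = i by apply: val_inj.
  by rewrite -Eji E in Hv.
have H2 : 2 ^ (nat_of_ord i) <= \sum_(j in u | ~~ (nat_of_ord i < nat_of_ord j)) 2 ^ (nat_of_ord j).
  by rewrite (bigD1 i) /= ?Hu ?ltnn //; apply: leq_addr.
have := sum_pow_lt (ltnW (ltn_ord i)); lia.
Qed.

Lemma w_inj (u v : mon) : w u = w v -> u = v.
Proof.
move=> E; apply/eqP; apply/negPn/negP => Neq.
set D := (u :\: v) :|: (v :\: u).
case: (set_0Vmem D) => [HD|[i0 Hi0]].
  case/negP: Neq; apply/eqP/setP => x.
  have : x \notin D by rewrite HD inE. rewrite !inE.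
  by case: (x \in u); case: (x \in v).
case: (arg_maxnP (fun j : 'I_m => nat_of_ord j) Hi0) => i Hi Hmax.
have Hout : forall j : 'I_m, nat_of_ord i < nat_of_ord j -> (j \in u) = (j \in v).
  move=> j Hj; apply/idP/idP => Hx; apply/negPn/negP => Hy.
  - have : j \in D by rewrite !inE Hx Hy. by move/Hmax; rewrite /= leqNgt Hj.
  - have : j \in D by rewrite !inE Hx Hy. by move/Hmax; rewrite /= leqNgt Hj.
have Hi2 : i \in D := Hi. move: Hi2; rewrite /D !inE => /orP [/andP [Hv Hu]|/andP [Hu Hv]].
- have := wlt Hu Hv Hout; lia.
- have := wlt Hv Hu (fun j Hj => esym (Hout j Hj)); lia.
Qed.

Lemma wU (a b : mon) : w (a :|: b) <= w a + w b.
Proof.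
rewrite /w big_mkcond [X in _ <= X + _]big_mkcond [X in _ <= _ + X]big_mkcond -big_split.
apply: leq_sum => j _ /=; rewrite inE; case: (j \in a); case: (j \in b) => //=; lia.
Qed.

Lemma wU1 (t : 'I_m) (b : mon) : t \notin b -> w (t |: b) = 2 ^ (nat_of_ord t) + w b.
Proof. by move=> H; rewrite /w big_setU1. Qed.

Lemma w_set1 (t : 'I_m) : w [set t] = 2 ^ (nat_of_ord t).
Proof. by rewrite /w big_set1. Qed.

Lemma w_set0 : w set0 = 0.
Proof. by rewrite /w big_set0. Qed.

Definition ismax (p : poly) (M : mon) := M \in p /\ forall v, v \in p -> w v <= w M.

Lemma ismax_uniq p M M' : ismax p M -> ismax p M' -> M = M'.
Proof.
move=> [H1 H2] [H3 H4]; apply: w_inj; have := H2 _ H3; have := H4 _ H1; lia.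
Qed.

Lemma ismax_ex p : p != pzero -> exists M, ismax p M.
Proof.
move=> Hp; case: (set_0Vmem p) => [E|[u0 Hu0]]; first by rewrite E eqxx in Hp.
case: (arg_maxnP w Hu0) => M HM Hmax; by exists M.
Qed.


Lemma set1_neq0 (i : 'I_m) : ([set i] == set0) = false.
Proof. by apply/negbTE/set0Pn; exists i; rewrite inE. Qed.

Lemma set1_eq (i j : 'I_m) : ([set i] == [set j]) = (i == j).
Proof. by apply/eqP/eqP => [/set1_inj|->]. Qed.

Lemma xor_set1 (P : pred 'I_m) (v : mon) :
  \big[addb/false]_(j | P j) (v == [set j]) = [exists j, P j && (v == [set j])].
Proof.
case: (pickP (fun j => P j && (v == [set j]))) => [j0 /andP [Pj0 /eqP Ev]| none].
- rewrite (bigD1 j0) //= Ev eqxx big1 /=.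
    by symmetry; apply/existsP; exists j0; rewrite Pj0 eqxx.
  by move=> j /andP [_ Hj]; rewrite set1_eq eq_sym (negbTE Hj).
- rewrite big1; last by move=> j Pj; have := none j; rewrite Pj.
  by symmetry; apply/existsP => [[j]]; rewrite none.
Qed.

Lemma mem_L (B : 'M[bool]_m) (e : {ffun 'I_m -> bool}) (i : 'I_m) v :
  (v \in lta_image B e i) =
  (v == [set i]) (+) [exists j : 'I_m, ((j < i) && B i j) && (v == [set j])]
    (+) ((v == set0) && e i).
Proof.
rewrite /lta_image !mem_padd mem_bigpadd.
under eq_bigr do rewrite /pvar inE.
rewrite xor_set1 /pvar inE addbA; congr (_ (+) _ (+) _).
by rewrite /Defs.pconst; case: (e i); rewrite /Defs.pone /Defs.pzero !inE ?andbT ?andbF.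
Qed.

Lemma L_cases (B : 'M[bool]_m) (e : {ffun 'I_m -> bool}) (i : 'I_m) (v : mon) : v \in lta_image B e i ->
  [\/ v = [set i], exists2 j : 'I_m, j < i & v = [set j] | v = set0].
Proof.
rewrite mem_L; case: eqP => [->|_]; first by move=> _; apply: Or31.
case E: [exists j : 'I_m, _] => /=.
  by move: E => /existsP [j /andP [/andP [Hj _] /eqP ->]] _; apply: Or32; exists j.
by move=> /andP [/eqP -> _]; apply: Or33.
Qed.

Lemma L_self (B : 'M[bool]_m) (e : {ffun 'I_m -> bool}) (i : 'I_m) : [set i] \in lta_image B e i.
Proof.
rewrite mem_L eqxx set1_neq0 /= addbF.
by apply/negP => /existsP [j /andP [/andP [Hj _]]]; rewrite set1_eq => /eqP Eij; rewrite Eij ltnn in Hj.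
Qed.

Lemma w_L (B : 'M[bool]_m) (e : {ffun 'I_m -> bool}) (i : 'I_m) (v : mon) : v \in lta_image B e i -> w v <= 2 ^ i /\ (w v = 2 ^ i -> v = [set i]).
Proof.
case/L_cases => [->|[j Hj ->]|->].
- by rewrite w_set1.
- rewrite w_set1; have : 2 ^ j < 2 ^ i by rewrite ltn_exp2l.
  move=> H; split; first exact: ltnW. by move=> E; rewrite E ltnn in H.
- rewrite w_set0; have := expn_gt0 2 i; split; first by []. lia.
Qed.

Definition phi (B : 'M[bool]_m) (e : {ffun 'I_m -> bool}) (u : mon) : poly := lta_act (B, e) u.

Lemma ev_bigmul (A : {set 'I_m}) (F : 'I_m -> poly) S :
  ev (\big[pmul/pone]_(i in A) F i) S = \big[andb/true]_(i in A) ev (F i) S.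
Proof.
apply: (big_morph (fun p : poly => ev p S)) => [p q|]; first exact: ev_pmul.
exact: ev_pone.
Qed.

Lemma phi_split (B : 'M[bool]_m) (e : {ffun 'I_m -> bool}) (u : mon) (t : 'I_m) : t \in u -> phi B e u = pmul (lta_image B e t) (phi B e (u :\ t)).
Proof.
move=> Ht; apply: ev_inj => S; rewrite ev_pmul /phi /lta_act /= !ev_bigmul.
by rewrite (big_setD1 _ Ht).
Qed.

Lemma phi_set0 (B : 'M[bool]_m) (e : {ffun 'I_m -> bool}) : phi B e set0 = pone.
Proof. by rewrite /phi /lta_act big_set0. Qed.

Lemma phi_max (B : 'M[bool]_m) (e : {ffun 'I_m -> bool}) (u : mon) : ismax (phi B e u) u.
Proof.
elim: {u}_.+1 {-2}u (ltnSn #|u|) => // n IH u Hu.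
case: (set_0Vmem u) => [->|[t Ht]].
  rewrite phi_set0; split; first by rewrite /Defs.pone inE.
  by move=> v; rewrite /Defs.pone inE => /eqP ->.
set u0 := u :\ t.
have Hu0 : #|u0| < n by move: Hu; rewrite /u0 (cardsD1 t u) Ht; lia.
have [IH1 IH2] := IH u0 Hu0.
have Ht0 : t \notin u0 by rewrite /u0 !inE eqxx.
have Eu : u = t |: u0 by rewrite /u0 setD1K.
have wu : w u = 2 ^ t + w u0 by rewrite Eu wU1.
have key : forall a b, a \in lta_image B e t -> b \in phi B e u0 ->
    w (a :|: b) <= w u /\ (a :|: b = u -> a = [set t] /\ b = u0).
  move=> a b Ha Hb; have [wa1 wa2] := w_L Ha; have wb := IH2 b Hb; have wab := wU a b.
  split; first lia.
  move=> Eab; have wa : w a = 2 ^ t by rewrite Eab in wab; lia.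
  split; first exact: wa2.
  apply: w_inj; rewrite Eab in wab; lia.
rewrite (phi_split B e Ht); split.
- rewrite mem_pmul (bigD1 [set t]) ?L_self //= (bigD1 u0) //= -Eu eqxx /=.
  rewrite big1 /=; last first.
    move=> b /andP [Hb Nb]; apply/negbTE/eqP => Eb.
    by have [_ ] := (key _ _ (L_self B e t) Hb).2 (esym Eb); move/eqP: Nb.
  rewrite big1 // => a /andP [Ha Na]; rewrite big1 // => b Hb.
  apply/negbTE/eqP => Eb; have [Ea _] := (key _ _ Ha Hb).2 (esym Eb).
  by move/eqP: Na.
- move=> v /mem_pmul_ex [a [b [Ha Hb ->]]]; exact: (key _ _ Ha Hb).1.
Qed.


Lemma pmul1 (p : poly) : pmul pone p = p.
Proof. by apply: ev_inj => S; rewrite ev_pmul ev_pone. Qed.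

Lemma pmul0 (p : poly) : pmul pzero p = pzero.
Proof. by apply: ev_inj => S; rewrite ev_pmul ev_pzero. Qed.

Lemma mem_pone (v : mon) : (v \in pone) = (v == set0).
Proof. by rewrite /Defs.pone inE. Qed.

Definition aff (n : nat) (l : poly) :=
  forall v, v \in l -> v = set0 \/ exists2 k : 'I_m, k < n & v = [set k].

Definition concl (f0 : mon) (n : nat) (M : mon) :=
  M = f0 \/ exists2 k : 'I_m, (k \notin f0) && (k < n) & M = k |: f0.

Lemma concl_S f0 n M : concl f0 n M -> concl f0 n.+1 M.
Proof.
case=> [->|[k /andP [H1 H2] ->]]; first by left.
by right; exists k => //; rewrite H1 ltnS ltnW.
Qed.

Lemma Lrow_eq (B B' : 'M[bool]_m) (e e' : {ffun 'I_m -> bool}) (i : 'I_m) :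
  (forall j, B i j = B' i j) -> e i = e' i -> lta_image B e i = lta_image B' e' i.
Proof.
move=> HB He; rewrite /lta_image He; congr (padd _ (padd _ _)).
by apply: eq_bigl => j; rewrite HB.
Qed.

Lemma Saff (B : 'M[bool]_m) (e : {ffun 'I_m -> bool}) (f0 : mon) (n : nat) (l : poly) :
  aff n l -> pmul l (phi B e f0) != pzero ->
  exists M, ismax (pmul l (phi B e f0)) M /\ concl f0 n M.
Proof.
elim: n l => [|n IH] l Hl Hne.
  case E: (set0 \in l).
  - have -> : l = pone.
      apply/setP => v; rewrite /Defs.pone inE; apply/idP/eqP => [/Hl [//|[k]] //|->//].
    by exists f0; rewrite pmul1; split; [exact: phi_max | left].
  - have El : l = pzero.
      apply/setP => v; rewrite /Defs.pzero inE; apply/negbTE/negP => /[dup] Hv /Hl [E0|[k]//].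
      by rewrite E0 E in Hv.
    by rewrite El pmul0 eqxx in Hne.
case: (ltnP n m) => Hnm; last first.
  have Hl' : aff n l.
    move=> v /Hl [->|[k Hk ->]]; [by left | right; exists k => //].
    by apply: leq_trans (ltn_ord k) Hnm.
  by have [M [HM HC]] := IH l Hl' Hne; exists M; split => //; apply: concl_S.
set k := Ordinal Hnm.
case Hk: ([set k] \in l); last first.
  have Hl' : aff n l.
    move=> v /[dup] Hv /Hl [->|[j Hj Ev]]; [by left | right; exists j => //].
    move: Hj; rewrite ltnS leq_eqVlt => /orP [/eqP Ej|//].
    have Ejk : j = k by apply: val_inj.
    by rewrite Ev Ejk Hk in Hv.
  by have [M [HM HC]] := IH l Hl' Hne; exists M; split => //; apply: concl_S.
case Hkf: (k \in f0).
- set l' := padd l (padd (lta_image B e k) pone).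
  have Eq : pmul l' (phi B e f0) = pmul l (phi B e f0).
    rewrite /l' (phi_split B e Hkf); move: (lta_image B e k) (phi B e (f0 :\ k)) => L X.
    apply: ev_inj => S; rewrite !(ev_pmul, ev_padd, ev_pone).
    by case: (ev l S); case: (ev L S); case: (ev X S).
  have Hl' : aff n l'.
    move=> v; rewrite /l' mem_padd (mem_padd (lta_image B e k)) mem_pone.
    case: (eqVneq v set0) => [->|Nv]; first by left.
    rewrite /= addbF => Hv; right.
    case Hvl: (v \in l); move: Hv; rewrite Hvl /=.
    + move=> Hvk; have [E0|[j Hj Ev]] := Hl v Hvl; first by rewrite E0 eqxx in Nv.
      exists j => //; move: Hj; rewrite ltnS leq_eqVlt => /orP [/eqP Ej|//].
      have Ejk : j = k by apply: val_inj.
      by rewrite Ev Ejk L_self in Hvk.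
    + case/L_cases => [Ev|[j Hj Ev]|E0]; last by rewrite E0 eqxx in Nv.
      * by rewrite Ev Hk in Hvl.
      * by exists j.
  have Hne' : pmul l' (phi B e f0) != pzero by rewrite Eq.
  have [M [HM HC]] := IH l' Hl' Hne'; exists M; rewrite -Eq; split => //; exact: concl_S.
- set B2 := (\matrix_(i, j) (if i == k then [set j] \in l else B i j) : 'M[bool]_m)%R.
  set e2 := [ffun i => if i == k then set0 \in l else e i].
  have C1 : lta_image B2 e2 k = l.
    apply/setP => v; rewrite mem_L /e2 ffunE eqxx.
    have HB : forall j, B2 k j = ([set j] \in l) by move=> j; rewrite /B2 mxE eqxx.
    case Hv: (v \in l).
    + have [E0|[j Hj Ev]] := Hl v Hv.
      * rewrite E0 eq_sym set1_neq0 eqxx /=. 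
        have H0 : set0 \in l by rewrite -E0.
        rewrite H0 addbT; apply/negP => /existsP [j /andP [_]].
        by rewrite eq_sym set1_neq0.
      * rewrite Ev set1_neq0 andFb addbF set1_eq.
        case: (eqVneq j k) => [Ejk|Njk] /=.
          rewrite Ejk; apply/negP => /existsP [j' /andP [/andP [Hj' _]]].
          by rewrite set1_eq => /eqP Ekj; move: Hj'; rewrite -Ekj /= ltnn.
        apply/existsP; exists j; rewrite eqxx andbT HB -Ev Hv andbT.
        move: Hj; rewrite ltnS leq_eqVlt => /orP [/eqP Ej|//].
        by case/eqP: Njk; apply: val_inj.
    + 
      have -> : (v == [set k]) = false by apply/negbTE/eqP => Ev; rewrite Ev Hk in Hv.
      have -> : (v == set0) && (set0 \in l) = false.
        by apply/negbTE/negP => /andP [/eqP Ev H0]; rewrite Ev H0 in Hv.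
      rewrite /= addbF; apply/negbTE/negP => /existsP [j /andP [/andP [_ Hj] /eqP Ev]].
      by rewrite HB -Ev Hv in Hj.
  have C2 : phi B2 e2 f0 = phi B e f0.
    rewrite /phi /lta_act /=; apply: eq_bigr => i Hi.
    have Nik : (i == k) = false by apply/negbTE/eqP => Eik; rewrite Eik Hkf in Hi.
    by apply: Lrow_eq => [j|]; rewrite ?mxE ?ffunE Nik.
  have E3 : pmul l (phi B e f0) = phi B2 e2 (k |: f0).
    by rewrite (phi_split B2 e2 (setU11 k f0)) setU1K ?Hkf // C1 C2.
  exists (k |: f0); rewrite E3; split; first exact: phi_max.
  by right; exists k; rewrite ?Hkf //=.
Qed.


Definition below (t : nat) (p : poly) := forall v, v \in p -> forall j : 'I_m, j \in v -> j < t.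

Lemma below_pmul t p q : below t p -> below t q -> below t (pmul p q).
Proof.
move=> Hp Hq v /mem_pmul_ex [a [b [Ha Hb ->]]] j; rewrite inE => /orP [H|H].
exact: Hp H. exact: Hq H.
Qed.

Lemma below_padd t p q : below t p -> below t q -> below t (padd p q).
Proof.
move=> Hp Hq v; rewrite mem_padd; case Hv: (v \in p) => /= H; first exact: Hp.
exact: Hq.
Qed.

Lemma below_pone t : below t pone.
Proof. by move=> v; rewrite mem_pone => /eqP -> j; rewrite inE. Qed.

Lemma below_L (B : 'M[bool]_m) (e : {ffun 'I_m -> bool}) (i : 'I_m) t :
  i < t -> below t (lta_image B e i).
Proof.
move=> Hi v /L_cases [->|[j Hj ->]|->] x.
- by rewrite inE => /eqP ->.
- by rewrite inE => /eqP ->; exact: ltn_trans Hj Hi.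
- by rewrite inE.
Qed.

Lemma below_phi (B : 'M[bool]_m) (e : {ffun 'I_m -> bool}) (u : mon) t :
  (forall i, i \in u -> i < t) -> below t (phi B e u).
Proof.
move=> H; rewrite /phi /lta_act /=.
apply: (big_ind (below t)); [exact: below_pone | exact: below_pmul |].
by move=> i Hi; apply: below_L; apply: H.
Qed.

Definition R (B : 'M[bool]_m) (e : {ffun 'I_m -> bool}) (i : 'I_m) : poly :=
  padd (\big[padd/pzero]_(j < m | (val j < val i) && B i j) pvar j) (pconst (e i)).

Lemma L_R B e i : lta_image B e i = padd (pvar i) (R B e i).
Proof. by []. Qed.

Lemma R_cases (B : 'M[bool]_m) (e : {ffun 'I_m -> bool}) (i : 'I_m) (v : mon) :
  v \in R B e i -> v = set0 \/ exists2 j : 'I_m, j < i & v = [set j].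
Proof.
rewrite /R mem_padd mem_bigpadd.
under eq_bigr do rewrite /pvar inE.
rewrite xor_set1.
case E: [exists j : 'I_m, _] => /=.
  by move: E => /existsP [j /andP [/andP [Hj _] /eqP ->]] _; right; exists j.
by rewrite /Defs.pconst; case: (e i); rewrite /Defs.pone /Defs.pzero !inE // => /eqP ->; left.
Qed.

Lemma mem_pmul_pvar (t : 'I_m) (C : poly) (v : mon) : below t C ->
  (v \in pmul (pvar t) C) = (t \in v) && (v :\ t \in C).
Proof.
move=> HC; rewrite mem_pmul /pvar big_set1.
case: (boolP ((t \in v) && (v :\ t \in C))) => [/andP [Htv HvC]|N].
- rewrite (bigD1 (v :\ t)) //= setD1K // eqxx /= big1 // => b /andP [Hb Nb].
  apply/negbTE/eqP => Ev; case/eqP: Nb; rewrite Ev setU1K //.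
  by apply/negP => /(HC _ Hb); rewrite ltnn.
- rewrite big1 // => b Hb; apply/negbTE/eqP => Ev; case/negP: N.
  rewrite Ev setU1K ?Hb ?setU11 //.
  by apply/negP => /(HC _ Hb); rewrite ltnn.
Qed.

Definition form (f M : mon) :=
  exists2 i : 'I_m, i \in f &
    (M = f :\ i \/ exists2 j : 'I_m, (j \notin f) && (j < i) & M = j |: (f :\ i)).


Lemma padd_eq0 (p q : poly) : padd p q = pzero -> p = q.
Proof.
move=> E; apply/setP => x; have : x \in padd p q = false by rewrite E /Defs.pzero inE.
by rewrite mem_padd; case: (x \in p); case: (x \in q).
Qed.

Lemma below_R B e (i : 'I_m) : below i (R B e i).
Proof.
move=> v /R_cases [->|[j Hj ->]] x; rewrite inE //.
by move/eqP ->.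
Qed.

Lemma K (B B' : 'M[bool]_m) (e e' : {ffun 'I_m -> bool}) (f : mon) :
  phi B e f != phi B' e' f ->
  exists M, ismax (padd (phi B e f) (phi B' e' f)) M /\ form f M.
Proof.
elim: {f}_.+1 {-2}f (ltnSn #|f|) => // n IH f Hf Hne.
case: (set_0Vmem f) => [E0|[t0 Ht0]].
  by rewrite E0 !phi_set0 eqxx in Hne.
case: (arg_maxnP (fun j : 'I_m => nat_of_ord j) Ht0) => t Ht Hmax.
have Htf : t \in f := Ht.
have Hf0 : forall j, j \in f :\ t -> j < t.
  move=> j; rewrite !inE => /andP [Njt Hj]; have := Hmax j Hj.
  rewrite /= leq_eqVlt => /orP [/eqP E|//].
  by case/eqP: Njt; apply: val_inj.
have Hcard : #|f :\ t| < n by move: Hf; rewrite (cardsD1 t f) Htf add1n ltnS.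
have bA0 : below t (phi B e (f :\ t)) := below_phi Hf0.
have bA0' : below t (phi B' e' (f :\ t)) := below_phi Hf0.
have Edec : padd (phi B e f) (phi B' e' f) =
   padd (pmul (pvar t) (padd (phi B e (f :\ t)) (phi B' e' (f :\ t))))
        (padd (pmul (R B e t) (phi B e (f :\ t))) (pmul (R B' e' t) (phi B' e' (f :\ t)))).
  rewrite (phi_split B e Htf) (phi_split B' e' Htf) !L_R.
  move: (pvar t) (R B e t) (R B' e' t) (phi B e (f :\ t)) (phi B' e' (f :\ t)) => X Y Y' Z Z'.
  apply: ev_inj => S; rewrite !(ev_pmul, ev_padd).
  by case: (ev X S); case: (ev Y S); case: (ev Y' S); case: (ev Z S); case: (ev Z' S).
case: (eqVneq (phi B e (f :\ t)) (phi B' e' (f :\ t))) => [EA|NA].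
- have Ec : padd (phi B e f) (phi B' e' f) =
      pmul (padd (R B e t) (R B' e' t)) (phi B e (f :\ t)).
    rewrite Edec -EA.
    move: (pvar t) (R B e t) (R B' e' t) (phi B e (f :\ t)) => X Y Y' Z.
    apply: ev_inj => S; rewrite !(ev_pmul, ev_padd).
    by case: (ev X S); case: (ev Y S); case: (ev Y' S); case: (ev Z S).
  have Hl : aff t (padd (R B e t) (R B' e' t)).
    move=> v Hv; have : (v \in R B e t) || (v \in R B' e' t).
      by move: Hv; rewrite mem_padd; case: (v \in R B e t); case: (v \in R B' e' t).
    by case/orP => /R_cases [->|[j Hj ->]]; [left|right; exists j|left|right; exists j].
  have Hne2 : pmul (padd (R B e t) (R B' e' t)) (phi B e (f :\ t)) != pzero.
    by rewrite -Ec; apply: contra Hne => /eqP /padd_eq0 ->.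
  have [M [HM HC]] := Saff Hl Hne2.
  exists M; rewrite Ec; split => //; exists t => //.
  case: HC => [->|[k /andP [Hk1 Hk2] ->]]; [by left | right; exists k => //].
  rewrite Hk2 andbT; apply/negP => Hkf; move: Hk1; rewrite !inE Hkf andbT negbK.
  by move/eqP => Ekt; rewrite Ekt ltnn in Hk2.
- have [M0 [[HM0 HM0max] HF0]] := IH (f :\ t) Hcard NA.
  have bC : below t (padd (phi B e (f :\ t)) (phi B' e' (f :\ t))) := below_padd bA0 bA0'.
  have bQ : below t (padd (pmul (R B e t) (phi B e (f :\ t))) (pmul (R B' e' t) (phi B' e' (f :\ t)))).
    by apply: below_padd; apply: below_pmul => //; apply: below_R.
  have Ht0M : t \notin M0 by apply/negP => /(bC _ HM0); rewrite ltnn.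
  exists (t |: M0); rewrite Edec; split; [split|].
  + rewrite mem_padd (mem_pmul_pvar _ bC) setU11 setU1K // HM0 /=.
    by apply/negP => /(bQ _) /(_ t (setU11 t M0)); rewrite ltnn.
  + move=> v; rewrite mem_padd (mem_pmul_pvar _ bC) wU1 //.
    case: (boolP ((t \in v) && (v :\ t \in padd (phi B e (f :\ t)) (phi B' e' (f :\ t))))) => [/andP [Htv HvC] _|_ /= HvQ].
    * have Hn : t \notin v :\ t by rewrite setD11.
      rewrite -(setD1K Htv) wU1 //; by rewrite leq_add2l; apply: HM0max.
    * have := w_below (ltnW (ltn_ord t)) (bQ _ HvQ) => H; exact: leq_trans (ltnW H) (leq_addr _ _).
  + have [i Hi [EM|[j /andP [Hj1 Hj2] EM]]] := HF0; exists i.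
    * by move: Hi; rewrite inE => /andP [_].
    * left; rewrite EM; apply/setP => x; rewrite !inE.
      case: (eqVneq x t) => [->|]; last by [].
      by move: Hi; rewrite !inE => /andP [Hit _]; rewrite eq_sym Hit Htf.
    * by move: Hi; rewrite inE => /andP [_].
    * right; exists j.
        rewrite Hj2 andbT; apply/negP => Hjf; move: Hj1; rewrite !inE Hjf andbT negbK => /eqP Ejt.
        move: Hi; rewrite !inE => /andP [_ Hif]; have := Hmax i Hif; rewrite /= -Ejt; lia.
      rewrite EM; apply/setP => x; rewrite !inE.
      case: (eqVneq x t) => [->|]; last by [].
      by move: Hi; rewrite !inE => /andP [Hit _]; rewrite (eq_sym t i) Hit Htf !orbT.
Qed.


Lemma form_sub (f M : mon) : form f M ->
  exists2 i, i \in f & (f :\ i \subset M) && (#|M| <= #|f|).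
Proof.
case=> i Hi [->|[j _ ->]]; exists i => //.
- by rewrite subxx /= (cardsD1 i f) Hi leq_addl.
- rewrite subsetUr /= cardsU1 (cardsD1 i f) Hi.
  by case: (j \notin f :\ i).
Qed.

Lemma comb2 (f g M : mon) (r : nat) : form f M -> form g M -> #|f| = r -> #|g| = r ->
  #|f :&: g| + 2 < r -> False.
Proof.
move=> /form_sub [i Hi /andP [Sf Cf]] /form_sub [k Hk /andP [Sg _]] Ef Eg Hc.
have H1 : #|(f :\ i) :|: (g :\ k)| <= #|M| by apply: subset_leq_card; rewrite subUset Sf Sg.
have H2 : #|(f :\ i) :&: (g :\ k)| <= #|f :&: g|.
  by apply: subset_leq_card; apply: setISS; apply: subD1set.
have H3 : #|f| = #|f :\ i|.+1 by rewrite (cardsD1 i f) Hi.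
have H4 : #|g| = #|g :\ k|.+1 by rewrite (cardsD1 k g) Hk.
have H5 : #|(f :\ i) :|: (g :\ k)| = #|f :\ i| + #|g :\ k| - #|(f :\ i) :&: (g :\ k)|.
  exact: cardsU.
lia.
Qed.

Lemma comb1 (f g M : mon) : form f M -> form g M ->
  two_largest_in ((f :|: g) :\: (f :&: g)) f -> #|f| = #|g| -> False.
Proof.
move=> Ff [k Hk HgM] [a [b [Ha Hb ab Hc /andP [Haf Hbf]]]] Efg.
have Hag : a \notin g by move: Ha; rewrite !inE Haf /= andbT.
have Hbg : b \notin g by move: Hb; rewrite !inE Hbf /= andbT.
have [i Hi HfM] := Ff.
set c := if a != i then a else b.
have Hcf : c \in f by rewrite /c; case: ifP.
have Hci : c != i.
  rewrite /c; case: (eqVneq a i) => [Eai|Nai] //=.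
  by apply/eqP => Ebi; move: ab; rewrite Ebi -Eai ltnn.
have Hcg : c \notin g by rewrite /c; case: ifP.
have Hac : a <= c by rewrite /c; case: ifP => // _; exact: ltnW.
have HcM : c \in M.
  by case: HfM => [->|[j _ ->]]; rewrite !inE Hci Hcf ?orbT.
have [l /andP [Hl1 Hl2] EM] : exists2 l : 'I_m, (l \notin g) && (l < k) & M = l |: (g :\ k).
  case: HgM => [EM|//]; by move: HcM; rewrite EM !inE (negbTE Hcg) andbF.
have Ecl : c = l.
  by move: HcM; rewrite EM !inE (negbTE Hcg) andbF orbF => /eqP.
have Hkf : k \in f.
  apply/negPn/negP => Nkf.
  have HkD : k \in (f :|: g) :\: (f :&: g) by rewrite !inE Hk (negbTE Nkf) orbT.
  have Nka : k != a by apply/eqP => Eka; rewrite -Eka Hk in Hag.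
  have Nkb : k != b by apply/eqP => Ekb; rewrite -Ekb Hk in Hbg.
  have Hka := Hc k HkD Nka Nkb; rewrite -Ecl in Hl2.
  by have := ltn_trans (leq_ltn_trans Hac Hl2) Hka; rewrite ltnn.
clear Hcf Hci Hcg Hac HcM Ecl.
have S1 : g :\: f \subset M :\: f.
  apply/subsetP => x; rewrite !inE EM !inE => /andP [Nxf Hxg]; rewrite Nxf Hxg /= andbT.
  by apply/orP; right; apply/eqP => Exk; rewrite Exk Hkf in Nxf.
have S2 : #|M :\: f| <= 1.
  case: HfM => [->|[j _ ->]].
  - have -> : f :\ i :\: f = set0 by apply/setP => x; rewrite !inE; case: (x \in f); rewrite ?andbF.
    by rewrite cards0.
  - rewrite -(cards1 j); apply: subset_leq_card; apply/subsetP => x; rewrite !inE.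
    by case: (x \in f); rewrite ?andbF ?andbT ?orbF //= => /andP [].
have S3 : 2 <= #|f :\: g|.
  have : [set a; b] \subset f :\: g by apply/subsetP => x; rewrite !inE => /orP [] /eqP ->; rewrite ?Haf ?Hbf ?Hag ?Hbg.
  move/subset_leq_card; rewrite cards2.
  have -> : a != b by apply/eqP => Eab; rewrite Eab ltnn in ab.
  by [].
have S4 := subset_leq_card S1.
have C1 := cardsID g f; have C2 := cardsID f g.
rewrite setIC in C1.
lia.
Qed.

End Work.

Theorem theorem7 (m : nat) (I : {set monomial m}) (f g : monomial m) :
  decreasing I ->
  f \in I -> #|f| = maxdeg I ->
  g \in I -> #|g| = maxdeg I ->
  (* ind(fg / gcd(f,g)) = (ind f :|: ind g) :\: (ind f :&: ind g) *)
  (two_largest_in ((f :|: g) :\: (f :&: g)) f \/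
   two_largest_in ((f :|: g) :\: (f :&: g)) g \/
   #|f :&: g| + 2 < maxdeg I) ->
  #|sumset (lta_orbit f) (lta_orbit g)| = #|lta_orbit f| * #|lta_orbit g|.
Proof.
move=> _ _ Hf _ Hg Hcond.
rewrite /sumset curry_imset2X card_in_imset ?cardsX //.
move=> [a b] [a' b']; rewrite !inE /= => /andP [Ha Hb] /andP [Ha' Hb'] E.
have padd_cancel : forall (p q q' : Rpoly m), padd p q = padd p q' -> q = q'.
  move=> p q q' Epq; apply/setP => x; have : (x \in padd p q) = (x \in padd p q') by rewrite Epq.
  by rewrite !mem_padd; case: (x \in p); case: (x \in q); case: (x \in q').
have E1 : padd a a' = padd b b'.
  apply/setP => x; have : (x \in padd a b) = (x \in padd a' b') by rewrite E.
  by rewrite !mem_padd; case: (x \in a); case: (x \in a'); case: (x \in b); case: (x \in b').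
suff Eaa : a = a'.
  by rewrite -Eaa in E; rewrite Eaa (padd_cancel _ _ _ E).
apply/eqP/negPn/negP => Naa.
case/imsetP: Ha => [[B e] _ Ea]; case/imsetP: Ha' => [[B' e'] _ Ea'].
case/imsetP: Hb => [[C d] _ Eb]; case/imsetP: Hb' => [[C' d'] _ Eb'].
have Nphi : phi B e f != phi B' e' f by rewrite /phi -Ea -Ea'.
have [M [HM FM]] := K Nphi.
have Nb : b != b'.
  apply/negP => /eqP Ebb; case/negP: Naa; apply/eqP/padd_eq0.
  by rewrite E1 Ebb; apply/setP => x; rewrite mem_padd addbb /Defs.pzero inE.
have Nphi' : phi C d g != phi C' d' g by rewrite /phi -Eb -Eb'.
have [M' [HM' FM']] := K Nphi'.
rewrite /phi -Ea -Ea' in HM; rewrite /phi -Eb -Eb' -E1 in HM'.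
have EMM := ismax_uniq HM HM'; rewrite -EMM in FM'.
case: Hcond => [H|[H|H]].
- exact: comb1 FM FM' H (etrans Hf (esym Hg)).
- rewrite setUC setIC in H; exact: comb1 FM' FM H (etrans Hg (esym Hf)).
- exact: comb2 FM FM' Hf Hg H.
Qed.
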